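(* Let $X$ be a topological space and $M$ a maximal ideal of $B_1(X)$. The following are equivalent: (1) $M$ is real; (2) $Z_B[M]$ is closed under countable intersections; (3) $Z_B[M]$ has the countable intersection property (every countable subfamily has nonempty intersection).
   Context: For a topological space $X$, $B_1(X)$ denotes the lattice-ordered ring (pointwise operations and order) of all Baire one functions $f:X\to\mathbb{R}$, i.e. pointwise limits of sequences of continuous real-valued functions. For $f$, $Z(f)=\{x: f(x)=0\}$; for an ideal $I$, $Z_B[I]=\{Z(f): f\in I\}$. For a maximal ideal $M$, $M(f)=f+M$; $B_1(X)/M$ is a totally ordered field and $\Phi:\mathbb{R}\to B_1(X)/M$, $\Phi(r)=M(\mathbf r)$ ($\mathbf r$ the constant function $r$), is an order-preserving embedding. $M$ is real if $\Phi(\mathbb{R})=B_1(X)/M$, and hyper-real otherwise. *)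

(* Defs.v *)
From Stdlib Require Import Reals.
Open Scope R_scope.

Record topology (X : Type) := {
  is_open : (X -> Prop) -> Prop;
  open_full : is_open (fun _ => True);
  open_inter : forall U V, is_open U -> is_open V ->
                 is_open (fun x => U x /\ V x);
  open_union : forall F : (X -> Prop) -> Prop,
                 (forall U, F U -> is_open U) ->
                 is_open (fun x => exists U, F U /\ U x)
}.
Arguments is_open {X} _ _.

Definition R_open (V : R -> Prop) : Prop :=
  forall y, V y -> exists eps, 0 < eps /\ forall z, Rabs (z - y) < eps -> V z.

Definition continuous_on {X : Type} (T : topology X) (f : X -> R) : Prop :=
  forall V, R_open V -> is_open T (fun x => V (f x)).

Definition Baire_one {X : Type} (T : topology X) (f : X -> R) : Prop :=
  exists fn : nat -> X -> R,
    (forall n, continuous_on T (fn n)) /\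
    (forall x, Un_cv (fun n => fn n x) (f x)).

Definition B1_ideal {X : Type} (T : topology X) (I : (X -> R) -> Prop) : Prop :=
  (forall f, I f -> Baire_one T f) /\
  I (fun _ => 0) /\
  (forall f g, I f -> I g -> I (fun x => f x + g x)) /\
  (forall f g, Baire_one T g -> I f -> I (fun x => g x * f x)).

Definition B1_maximal_ideal {X : Type} (T : topology X) (M : (X -> R) -> Prop) : Prop :=
  B1_ideal T M /\
  ~ M (fun _ => 1) /\
  (forall J, B1_ideal T J -> (forall f, M f -> J f) ->
     (forall f, J f -> M f) \/ J (fun _ => 1)).

(* M is real: Phi(R) = B_1(X)/M, i.e. every coset f + M is r + M for a constant r. *)
Definition real_ideal {X : Type} (T : topology X) (M : (X -> R) -> Prop) : Prop :=
  forall f, Baire_one T f -> exists r : R, M (fun x => f x - r).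

Definition Zset {X : Type} (f : X -> R) : X -> Prop := fun x => f x = 0.

Definition ZB {X : Type} (I : (X -> R) -> Prop) (Z : X -> Prop) : Prop :=
  exists f, I f /\ forall x, Z x <-> Zset f x.

Definition ZB_closed_countable_inter {X : Type} (I : (X -> R) -> Prop) : Prop :=
  forall Zs : nat -> X -> Prop, (forall n, ZB I (Zs n)) ->
    ZB I (fun x => forall n, Zs n x).

(* Countable intersection property (finite subfamilies covered by repetition). *)
Definition ZB_countable_inter_prop {X : Type} (I : (X -> R) -> Prop) : Prop :=
  forall Zs : nat -> X -> Prop, (forall n, ZB I (Zs n)) ->
    exists x, forall n, Zs n x.

(* Main.v *)
Require Import Defs.
From Stdlib Require Import Arith Reals Lra Lia ClassicalEpsilon Classical FunctionalExtensionality PropExtensionality.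
Open Scope R_scope.

Lemma cont_eps (phi : R -> R) y : continuity_pt phi y ->
  forall eps, 0 < eps -> exists d, 0 < d /\ forall z, Rabs (z - y) < d -> Rabs (phi z - phi y) < eps.
Proof.
  intros H eps He. destruct (H eps He) as [d [Hd Hz]]. exists d; split; [lra|].
  intros z Hzy. destruct (Req_dec z y) as [->|Hne].
  - unfold Rminus; rewrite Rplus_opp_r, Rabs_R0; lra.
  - apply (Hz z). split; [split; [exact I| auto]|]. simpl. exact Hzy.
Qed.

Section Top.
Variable X : Type.
Variable T : topology X.

Lemma open_ext (U V : X -> Prop) : is_open T U -> (forall x, U x <-> V x) -> is_open T V.
Proof.
  intros HU H. assert (U = V) as <-; [|exact HU].
  apply functional_extensionality; intro x; apply propositional_extensionality; auto.
Qed.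

Lemma open_local (S : X -> Prop) :
  (forall x, S x -> exists U, is_open T U /\ U x /\ forall y, U y -> S y) -> is_open T S.
Proof.
  intros H.
  apply (open_ext (fun x => exists U, (is_open T U /\ forall y, U y -> S y) /\ U x)).
  - apply open_union. intros U [HU _]; exact HU.
  - intro x; split.
    + intros [U [[_ HUS] HUx]]; auto.
    + intro Sx. destruct (H x Sx) as [U [HU [HUx HUS]]]. exists U; auto.
Qed.

Lemma ball_R_open c e : R_open (fun z => Rabs (z - c) < e).
Proof.
  intros y Hy. exists (e - Rabs (y - c)). split; [lra|].
  intros z Hz. replace (z - c) with ((z - y) + (y - c)) by ring.
  pose proof (Rabs_triang (z - y) (y - c)). lra.
Qed.

Lemma cont_ball f a e : continuous_on T f -> is_open T (fun y => Rabs (f y - a) < e).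
Proof. intro Hf. apply (Hf (fun z => Rabs (z - a) < e)), ball_R_open. Qed.

Lemma cont_const c : continuous_on T (fun _ => c).
Proof.
  intros V HV. apply open_local. intros x Hx. exists (fun _ => True).
  split; [apply open_full|]. split; auto.
Qed.

Lemma cont_plus f g : continuous_on T f -> continuous_on T g ->
  continuous_on T (fun x => f x + g x).
Proof.
  intros Hf Hg V HV. apply open_local. intros x Hx.
  destruct (HV _ Hx) as [eps [He Heps]].
  exists (fun y => Rabs (f y - f x) < eps/2 /\ Rabs (g y - g x) < eps/2).
  split; [apply open_inter; apply cont_ball; auto|].
  split.
  - unfold Rminus; rewrite !Rplus_opp_r, Rabs_R0; lra.
  - intros y [H1 H2]. apply Heps.
    replace (f y + g y - (f x + g x)) with ((f y - f x) + (g y - g x)) by ring.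
    pose proof (Rabs_triang (f y - f x) (g y - g x)). lra.
Qed.

Lemma cont_comp (phi : R -> R) f : (forall y, continuity_pt phi y) -> continuous_on T f ->
  continuous_on T (fun x => phi (f x)).
Proof.
  intros Hphi Hf V HV. apply (Hf (fun y => V (phi y))).
  intros y Hy. destruct (HV _ Hy) as [eps [He Heps]].
  destruct (cont_eps phi y (Hphi y) eps He) as [d [Hd Hz]].
  exists d; split; auto.
Qed.

Lemma cont_sum (F : nat -> X -> R) : (forall n, continuous_on T (F n)) ->
  forall K, continuous_on T (fun x => sum_f_R0 (fun n => F n x) K).
Proof.
  intros HF K; induction K; simpl; auto.
  apply cont_plus; auto.
Qed.

Lemma B1_ext f g : Baire_one T f -> (forall x, f x = g x) -> Baire_one T g.
Proof.
  intros [fn [H1 H2]] He. exists fn; split; auto. intro x; rewrite <- He; auto.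
Qed.

Lemma B1_const c : Baire_one T (fun _ => c).
Proof.
  exists (fun _ _ => c). split; [intros; apply cont_const|].
  intros x eps He. exists O. intros; unfold Rdist; unfold Rminus; rewrite Rplus_opp_r, Rabs_R0; lra.
Qed.

Lemma B1_plus f g : Baire_one T f -> Baire_one T g -> Baire_one T (fun x => f x + g x).
Proof.
  intros [fn [H1 H2]] [gn [G1 G2]]. exists (fun n x => fn n x + gn n x).
  split; [intro; apply cont_plus; auto|]. intro x; apply CV_plus; auto.
Qed.

Lemma B1_comp (phi : R -> R) f : (forall y, continuity_pt phi y) -> Baire_one T f ->
  Baire_one T (fun x => phi (f x)).
Proof.
  intros Hphi [fn [H1 H2]]. exists (fun n x => phi (fn n x)).
  split; [intro; apply cont_comp; auto|]. intro x; apply continuity_seq; auto.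
Qed.

Lemma B1_scal c f : Baire_one T f -> Baire_one T (fun x => c * f x).
Proof. intro; apply (B1_comp (fun y => c * y)); auto. intro; reg. Qed.

Lemma B1_minus f g : Baire_one T f -> Baire_one T g -> Baire_one T (fun x => f x - g x).
Proof.
  intros Hf Hg. apply (B1_ext (fun x => f x + (-1) * g x)); [|intro; ring].
  apply B1_plus; auto; apply B1_scal; auto.
Qed.

Lemma B1_sq f : Baire_one T f -> Baire_one T (fun x => f x * f x).
Proof. intro; apply (B1_comp (fun y => y * y)); auto. intro; reg. Qed.

Lemma B1_mult f g : Baire_one T f -> Baire_one T g -> Baire_one T (fun x => f x * g x).
Proof.
  intros Hf Hg.
  apply (B1_ext (fun x => /4 * ((f x + g x) * (f x + g x) - (f x - g x) * (f x - g x)))); [|intro; field].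
  apply B1_scal. apply B1_minus; apply B1_sq; [apply B1_plus|apply B1_minus]; auto.
Qed.

Lemma B1_inv h : (forall x, h x <> 0) -> Baire_one T h -> Baire_one T (fun x => / h x).
Proof.
  intros Hnz [hn [H1 H2]].
  exists (fun n x => hn n x * / (hn n x * hn n x + / (INR n + 1))).
  split.
  - intro n. apply (cont_comp (fun y => y * / (y * y + / (INR n + 1)))); auto.
    intro y. assert (0 < / (INR n + 1)) by (apply Rinv_0_lt_compat; pose proof (pos_INR n); lra).
    apply continuity_pt_mult; [apply derivable_continuous_pt; reg|].
    apply continuity_pt_inv.
    + reg.
    + pose proof (Rle_0_sqr y); unfold Rsqr in *; lra.
  - intro x.
    replace (/ h x) with (h x * / (h x * h x + 0)).
    2:{ rewrite Rplus_0_r. field. auto. }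
    apply CV_mult; [auto|].
    apply (continuity_seq Rinv (fun n => hn n x * hn n x + / (INR n + 1))).
    + apply continuity_pt_inv; [apply derivable_continuous_pt; reg|].
      rewrite Rplus_0_r. apply Rmult_integral_contrapositive; auto.
    + apply CV_plus; [apply CV_mult; auto|].
      intros eps He. destruct (INR_unbounded (/ eps)) as [N HN].
      exists N. intros n Hn. unfold Rdist. rewrite Rminus_0_r.
      apply le_INR in Hn.
      assert (0 < INR n + 1) by (pose proof (pos_INR n); lra).
      rewrite Rabs_right by (left; apply Rinv_0_lt_compat; lra).
      apply (Rmult_lt_reg_l (INR n + 1)); auto.
      rewrite Rinv_r by lra.
      apply (Rmult_lt_reg_l (/ eps)). apply Rinv_0_lt_compat; lra.
      replace (/ eps * ((INR n + 1) * eps)) with (INR n + 1) by (field; lra). lra.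
Qed.
End Top.

Definition tr (y : R) := Rmin (Rabs y) 1.

Lemma tr_bounds y : 0 <= tr y <= 1.
Proof. unfold tr, Rmin. pose proof (Rabs_pos y). destruct Rle_dec; lra. Qed.

Lemma tr_zero y : tr y = 0 -> y = 0.
Proof.
  unfold tr, Rmin. destruct Rle_dec; intro H; [|lra].
  destruct (Req_dec y 0); auto. apply Rabs_no_R0 in H0. lra.
Qed.

Lemma tr_lip a b : Rabs (tr a - tr b) <= Rabs (a - b).
Proof.
  pose proof (Rabs_triang_inv a b). pose proof (Rabs_triang_inv b a).
  rewrite (Rabs_minus_sym b a) in H0.
  unfold tr, Rmin. repeat destruct Rle_dec; split_Rabs; lra.
Qed.

Lemma tr_cont y : continuity_pt tr y.
Proof.
  intros eps He. exists eps. split; auto. intros z [_ Hz]. simpl in *. unfold Rdist in *.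
  pose proof (tr_lip z y). lra.
Qed.

Lemma scal_tr_cont c y : continuity_pt (fun z => c * tr z) y.
Proof.
  apply (continuity_pt_mult (fun _ => c) tr). apply continuity_pt_const. intros a b; auto.
  apply tr_cont.
Qed.

Definition ps (a : nat -> R) K := sum_f_R0 (fun n => (/2)^n * a n) K.

Lemma half_pow_pos n : 0 < (/2)^n.
Proof. apply pow_lt; lra. Qed.

Lemma ps_tail a (Ha : forall n, 0 <= a n <= 1) N d :
  0 <= ps a (N + d) - ps a N <= (/2)^N - (/2)^(N + d).
Proof.
  induction d.
  - rewrite Nat.add_0_r. lra.
  - rewrite Nat.add_succ_r. unfold ps in *. simpl sum_f_R0.
    pose proof (half_pow_pos (N + d)). destruct (Ha (S (N + d))).
    simpl pow.
    assert (0 <= /2 * (/2)^(N+d) * a (S (N + d)) <= /2 * (/2)^(N+d)).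
    { split. apply Rmult_le_pos; lra. rewrite <- (Rmult_1_r (/2 * (/2)^(N+d))) at 2.
      apply Rmult_le_compat_l; lra. }
    lra.
Qed.

Lemma ps_zero a k : (forall n, (n <= k)%nat -> a n = 0) -> forall K, (K <= k)%nat -> ps a K = 0.
Proof.
  intros H K; induction K; intro HK; unfold ps in *; simpl.
  - rewrite H by lia. ring.
  - rewrite IHK by lia. rewrite H by lia. ring.
Qed.

Lemma ps_term a (Ha : forall n, 0 <= a n <= 1) n : (/2)^n * a n <= ps a n.
Proof.
  destruct n; unfold ps; simpl; [lra|].
  pose proof (ps_tail a Ha 0 n). unfold ps in H. simpl in H.
  pose proof (Ha 0%nat). lra.
Qed.

Lemma ps_grow a (Ha : forall n, 0 <= a n <= 1) : Un_growing (ps a).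
Proof. intro n. pose proof (ps_tail a Ha n 1). rewrite Nat.add_1_r in H. lra. Qed.

Lemma ps_ub a (Ha : forall n, 0 <= a n <= 1) : has_ub (ps a).
Proof.
  exists 2. intros y [n ->]. pose proof (ps_tail a Ha 0 n). unfold ps in *. simpl in *.
  pose proof (Ha 0%nat). pose proof (half_pow_pos n). lra.
Qed.

Definition ser (f : nat -> R) : R :=
  proj1_sig (growing_cv (ps (fun n => tr (f n)))
    (ps_grow _ (fun n => tr_bounds (f n))) (ps_ub _ (fun n => tr_bounds (f n)))).

Lemma ser_cv f : Un_cv (ps (fun n => tr (f n))) (ser f).
Proof. unfold ser. destruct growing_cv; simpl; auto. Qed.

Lemma lim_le u l c : Un_cv u l -> (forall n, u n <= c) -> l <= c.
Proof.
  intros Hu Hc. destruct (Rle_dec l c); auto. exfalso.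
  destruct (Hu (l - c)) as [N HN]; [lra|].
  specialize (HN N (le_n _)). specialize (Hc N). unfold Rdist in HN. split_Rabs; lra.
Qed.

Lemma ser_ge f K : ps (fun n => tr (f n)) K <= ser f.
Proof. apply growing_ineq; [apply ps_grow; intro; apply tr_bounds| apply ser_cv]. Qed.

Lemma ser_tail f N : 0 <= ser f - ps (fun n => tr (f n)) N <= (/2)^N.
Proof.
  split. pose proof (ser_ge f N); lra.
  assert (ser f <= ps (fun n => tr (f n)) N + (/2)^N); [|lra].
  apply (lim_le _ _ _ (ser_cv f)). intro K.
  assert (Ha : forall n, 0 <= tr (f n) <= 1) by (intro; apply tr_bounds).
  destruct (le_lt_dec N K).
  - replace K with (N + (K - N))%nat by lia. pose proof (ps_tail _ Ha N (K - N)).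
    pose proof (half_pow_pos (N + (K - N))). lra.
  - pose proof (ps_tail _ Ha K (N - K)). replace (K + (N - K))%nat with N in H by lia.
    pose proof (half_pow_pos N). lra.
Qed.

Lemma ser_nonneg f : 0 <= ser f.
Proof.
  pose proof (ser_ge f 0). unfold ps in H; simpl in H. pose proof (tr_bounds (f 0%nat)). lra.
Qed.

Lemma ser_zero_iff f : ser f = 0 <-> forall n, f n = 0.
Proof.
  split.
  - intros H n. pose proof (ps_term (fun n => tr (f n)) (fun n => tr_bounds (f n)) n).
    pose proof (ser_ge f n). pose proof (half_pow_pos n). pose proof (tr_bounds (f n)).
    apply tr_zero. apply Rle_antisym; [|lra].
    apply (Rmult_le_reg_l ((/2)^n)); auto. lra.
  - intros H. apply (UL_sequence (ps (fun n => tr (f n)))); [apply ser_cv|].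
    intros eps He. exists O. intros n _. rewrite (ps_zero _ n); auto.
    unfold Rdist; rewrite Rminus_0_r, Rabs_R0; lra.
    intros m _. rewrite H. unfold tr. rewrite Rabs_R0. unfold Rmin; destruct Rle_dec; lra.
Qed.

Lemma ser_small f k : (forall n, (n <= k)%nat -> f n = 0) -> ser f <= (/2)^k.
Proof.
  intros H. pose proof (ser_tail f k). rewrite (ps_zero _ k) in H0; auto. lra.
  intros n Hn. rewrite H by auto. unfold tr. rewrite Rabs_R0. unfold Rmin; destruct Rle_dec; lra.
Qed.

Lemma ps_cv (phi : nat -> nat -> R) (f : nat -> R) :
  (forall n, Un_cv (fun k => phi n k) (f n)) ->
  forall N, Un_cv (fun k => ps (fun n => tr (phi n k)) N) (ps (fun n => tr (f n)) N).
Proof.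
  intros H N. unfold ps. induction N; simpl.
  - apply (continuity_seq (fun z => 1 * tr z)); [apply scal_tr_cont|auto].
  - apply (CV_plus (fun k => sum_f_R0 (fun n => (/2)^n * tr (phi n k)) N)
                   (fun k => /2 * (/2)^N * tr (phi (S N) k))); auto.
    apply (continuity_seq (fun z => /2 * (/2)^N * tr z)); [apply scal_tr_cont|auto].
Qed.

Lemma B1_ser X (T : topology X) (f : nat -> X -> R) : (forall n, Baire_one T (f n)) ->
  Baire_one T (fun x => ser (fun n => f n x)).
Proof.
  intro Hf.
  set (phi := fun n => proj1_sig (constructive_indefinite_description _ (Hf n))).
  assert (Hphi : forall n, (forall k, continuous_on T (phi n k)) /\
                           (forall x, Un_cv (fun k => phi n k x) (f n x))).
  { intro n. unfold phi. destruct constructive_indefinite_description; simpl; auto. }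
  exists (fun k x => ps (fun n => tr (phi n k x)) k). split.
  - intro k. unfold ps.
    apply (cont_sum X T (fun n x => (/2)^n * tr (phi n k x))).
    intro n. apply (cont_comp X T (fun z => (/2)^n * tr z)); [intro; apply scal_tr_cont|].
    apply Hphi.
  - intros x eps He.
    destruct (pow_lt_1_zero (/2)) with (y := eps / 4) as [N HN].
    { rewrite Rabs_right; lra. } { lra. }
    specialize (HN N (le_n _)). rewrite Rabs_right in HN by (left; apply half_pow_pos).
    destruct (ps_cv (fun n k => phi n k x) (fun n => f n x) (fun n => proj2 (Hphi n) x) N
                (eps / 4)) as [K0 HK0]; [lra|].
    exists (max K0 N). intros k Hk.
    specialize (HK0 k ltac:(lia)). simpl in HK0. unfold Rdist in *.
    assert (Ha : forall n, 0 <= tr (phi n k x) <= 1) by (intro; apply tr_bounds).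
    pose proof (ps_tail _ Ha N (k - N)). replace (N + (k - N))%nat with k in H by lia.
    pose proof (half_pow_pos k).
    pose proof (ser_tail (fun n => f n x) N).
    split_Rabs; lra.
Qed.

Lemma lip_cont (phi : R -> R) y : (forall a b, Rabs (phi a - phi b) <= Rabs (a - b)) ->
  continuity_pt phi y.
Proof.
  intros H eps He. exists eps. split; auto. intros z [_ Hz]. simpl in *. unfold Rdist in *.
  pose proof (H z y). lra.
Qed.

Section Ideal.
Variable X : Type.
Variable T : topology X.
Variable M : (X -> R) -> Prop.
Hypothesis HM : B1_maximal_ideal T M.

Lemma M_B1 f : M f -> Baire_one T f.
Proof. destruct HM as [[H _] _]; auto. Qed.
Lemma M_zero : M (fun _ => 0).
Proof. destruct HM as [[_ [H _]] _]; auto. Qed.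
Lemma M_plus f g : M f -> M g -> M (fun x => f x + g x).
Proof. destruct HM as [[_ [_ [H _]]] _]; auto. Qed.
Lemma M_mul g f : Baire_one T g -> M f -> M (fun x => g x * f x).
Proof. destruct HM as [[_ [_ [_ H]]] _]; auto. Qed.
Lemma M_one : ~ M (fun _ => 1).
Proof. destruct HM as [_ [H _]]; auto. Qed.
Lemma M_ext f g : M f -> (forall x, f x = g x) -> M g.
Proof.
  intros Hf H. assert (f = g) as <-; auto. apply functional_extensionality; auto.
Qed.

Lemma decomp f : Baire_one T f -> ~ M f ->
  exists m h, M m /\ Baire_one T h /\ forall x, m x + h x * f x = 1.
Proof.
  intros Hf Hnf.
  set (J := fun g => exists m h, M m /\ Baire_one T h /\ forall x, g x = m x + h x * f x).
  assert (HJ : B1_ideal T J).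
  { split; [|split; [|split]].
    - intros g [m [h [Hm [Hh He]]]]. apply (B1_ext _ T (fun x => m x + h x * f x)).
      + apply B1_plus; [apply M_B1; auto| apply B1_mult; auto].
      + intro; auto.
    - exists (fun _ => 0), (fun _ => 0). split; [apply M_zero|]. split; [apply B1_const|].
      intro; ring.
    - intros g1 g2 [m1 [h1 [Hm1 [Hh1 He1]]]] [m2 [h2 [Hm2 [Hh2 He2]]]].
      exists (fun x => m1 x + m2 x), (fun x => h1 x + h2 x).
      split; [apply M_plus; auto|]. split; [apply B1_plus; auto|].
      intro x; rewrite He1, He2; ring.
    - intros g k Hk [m [h [Hm [Hh He]]]].
      exists (fun x => k x * m x), (fun x => k x * h x).
      split; [apply M_mul; auto|]. split; [apply B1_mult; auto|].
      intro x; rewrite He; ring. }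
  destruct HM as [_ [_ Hmax]].
  destruct (Hmax J HJ) as [H | H].
  - intros g Hg. exists g, (fun _ => 0). split; [auto|]. split; [apply B1_const|]. intro; ring.
  - exfalso. apply Hnf, H. exists (fun _ => 0), (fun _ => 1).
    split; [apply M_zero|]. split; [apply B1_const|]. intro; ring.
  - destruct H as [m [h [Hm [Hh He]]]]. exists m, h. split; [auto|]. split; [auto|].
    intro x; rewrite <- He; auto.
Qed.

Lemma A_nonempty f : M f -> exists x, f x = 0.
Proof.
  intro Hf. apply NNPP. intro Hn.
  assert (Hnz : forall x, f x <> 0) by (intros x Hx; apply Hn; eauto).
  apply M_one. apply (M_ext (fun x => / f x * f x)).
  - apply M_mul; auto. apply B1_inv; auto. apply M_B1; auto.
  - intro x. field. auto.
Qed.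

Lemma M_sumsq (F : nat -> X -> R) : (forall n, M (F n)) ->
  forall k, M (fun x => sum_f_R0 (fun n => F n x * F n x) k).
Proof.
  intros HF k; induction k; simpl.
  - apply M_mul; auto; apply M_B1; auto.
  - apply M_plus; auto. apply M_mul; auto; apply M_B1; auto.
Qed.

Lemma sumsq_zero (a : nat -> R) k :
  0 <= sum_f_R0 (fun n => a n * a n) k /\
  (sum_f_R0 (fun n => a n * a n) k = 0 -> forall n, (n <= k)%nat -> a n = 0).
Proof.
  induction k; simpl.
  - split; [nra|]. intros H n Hn. assert (n = 0%nat) as -> by lia. nra.
  - destruct IHk as [H1 H2]. split; [nra|]. intros H n Hn.
    assert (sum_f_R0 (fun n => a n * a n) k = 0 /\ a (S k) * a (S k) = 0) as [Ha Hb] by nra.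
    destruct (Nat.eq_dec n (S k)) as [->|Hne]; [nra|]. apply H2; auto; lia.
Qed.

Definition pick_fn (Zs : nat -> X -> Prop) (HZs : forall n, ZB M (Zs n)) (n : nat) : X -> R :=
  proj1_sig (constructive_indefinite_description _ (HZs n)).

Lemma pick_fn_spec Zs HZs n : M (pick_fn Zs HZs n) /\ forall x, Zs n x <-> pick_fn Zs HZs n x = 0.
Proof. unfold pick_fn. destruct constructive_indefinite_description; simpl; auto. Qed.

Lemma L12 : real_ideal T M -> ZB_closed_countable_inter M.
Proof.
  intros Hreal Zs HZs.
  set (fn := pick_fn Zs HZs). pose proof (pick_fn_spec Zs HZs) as Hfn. fold fn in Hfn.
  set (g := fun x => ser (fun n => fn n x)).
  assert (Hg : Baire_one T g) by (apply B1_ser; intro n; apply M_B1, Hfn).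
  assert (HMg : M g).
  { destruct (Hreal g Hg) as [r Hr].
    destruct (Rtotal_order r 0) as [Hlt | [Heq | Hgt]].
    - exfalso. destruct (A_nonempty _ Hr) as [x Hx]. pose proof (ser_nonneg (fun n => fn n x)).
      unfold g in Hx. lra.
    - apply (M_ext _ _ Hr). intro; rewrite Heq; ring.
    - exfalso.
      destruct (pow_lt_1_zero (/2)) with (y := r) as [k Hk]; [rewrite Rabs_right; lra| lra|].
      specialize (Hk k (le_n _)). rewrite Rabs_right in Hk by (left; apply half_pow_pos).
      assert (HQ : M (fun x => sum_f_R0 (fun n => fn n x * fn n x) k + (g x - r) * (g x - r))).
      { apply M_plus; [apply M_sumsq; intro; apply Hfn|]. apply M_mul; auto.
        apply M_B1; auto. }
      destruct (A_nonempty _ HQ) as [x Hx]. cbv beta in Hx.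
      destruct (sumsq_zero (fun n => fn n x) k) as [H1 H2].
      remember (sum_f_R0 (fun n => fn n x * fn n x) k) as s0 eqn:Es.
      remember (g x - r) as q0 eqn:Eq.
      assert (s0 = 0 /\ q0 = 0) as [Hs Hgr] by nra. rewrite Eq in Hgr.
      pose proof (ser_small (fun n => fn n x) k (H2 Hs)). unfold g in Hgr. lra. }
  exists g. split; auto. intro x. unfold Zset, g. rewrite ser_zero_iff.
  split; intros H n; specialize (H n); apply (proj2 (Hfn n)); auto.
Qed.

Lemma L23 : ZB_closed_countable_inter M -> ZB_countable_inter_prop M.
Proof.
  intros Hc Zs HZs. destruct (Hc Zs HZs) as [h [Hh He]].
  destruct (A_nonempty h Hh) as [x Hx]. exists x. apply He. exact Hx.
Qed.

Lemma cip_plus : ZB_countable_inter_prop M -> forall m (w : nat -> X -> R),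
  M m -> (forall n, M (w n)) -> exists x, m x = 0 /\ forall n, w n x = 0.
Proof.
  intros Hc m w Hm Hw.
  destruct (Hc (fun n => match n with O => Zset m | S n => Zset (w n) end)) as [x Hx].
  - intros [|n]; [exists m | exists (w n)]; split; auto; tauto.
  - exists x. split; [apply (Hx O)|]. intro n; apply (Hx (S n)).
Qed.

Lemma L32 : ZB_countable_inter_prop M -> ZB_closed_countable_inter M.
Proof.
  intros Hc Zs HZs.
  set (fn := pick_fn Zs HZs). pose proof (pick_fn_spec Zs HZs) as Hfn. fold fn in Hfn.
  set (g := fun x => ser (fun n => fn n x)).
  assert (Hg : Baire_one T g) by (apply B1_ser; intro n; apply M_B1, Hfn).
  assert (HMg : M g).
  { apply NNPP; intro Hn. destruct (decomp g Hg Hn) as [m [h [Hm [Hh He]]]].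
    destruct (cip_plus Hc m fn Hm (fun n => proj1 (Hfn n))) as [x [Hmx Hw]].
    specialize (He x). assert (g x = 0) by (apply ser_zero_iff; auto).
    rewrite Hmx, H in He. lra. }
  exists g. split; auto. intro x. unfold Zset, g. rewrite ser_zero_iff.
  split; intros H n; specialize (H n); apply (proj2 (Hfn n)); auto.
Qed.

Lemma L31 : ZB_countable_inter_prop M -> real_ideal T M.
Proof.
  intros Hc f Hf.
  set (u := fun r x => Rmin (f x - r) 0).
  set (v := fun r x => Rmax (f x - r) 0).
  assert (Hu : forall r, Baire_one T (u r)).
  { intro r. apply (B1_comp X T (fun y => Rmin (y - r) 0)); auto.
    intro; apply lip_cont; intros a b; unfold Rmin; repeat destruct Rle_dec; split_Rabs; lra. }
  assert (Hv : forall r, Baire_one T (v r)).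
  { intro r. apply (B1_comp X T (fun y => Rmax (y - r) 0)); auto.
    intro; apply lip_cont; intros a b; unfold Rmax; repeat destruct Rle_dec; split_Rabs; lra. }
  assert (Huz : forall r x, u r x = 0 -> r <= f x).
  { intros r x; unfold u, Rmin; destruct Rle_dec; lra. }
  assert (Hvz : forall r x, v r x = 0 -> f x <= r).
  { intros r x; unfold v, Rmax; destruct Rle_dec; lra. }
  assert (Hprime : forall r, M (u r) \/ M (v r)).
  { intro r. destruct (classic (M (u r))) as [H|H]; [left; auto|right].
    destruct (decomp _ (Hu r) H) as [m [h [Hm [Hh He]]]].
    apply (M_ext (fun x => v r x * m x)); [apply M_mul; auto|].
    intro x. assert (Huv : u r x * v r x = 0).
    { unfold u, v, Rmin, Rmax; repeat destruct Rle_dec; nra. }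
    assert (m x = 1 - h x * u r x) as -> by (specialize (He x); lra).
    replace (v r x * (1 - h x * u r x)) with (v r x - h x * (u r x * v r x)) by ring.
    rewrite Huv; ring. }
  assert (Hcip2 : forall m1 m2, M m1 -> M m2 -> exists x, m1 x = 0 /\ m2 x = 0).
  { intros m1 m2 H1 H2. destruct (cip_plus Hc m1 (fun _ => m2) H1 (fun _ => H2)) as [x [Hx1 Hx2]].
    exists x; split; auto. apply (Hx2 O). }
  assert (Hnu : ~ forall n, M (u (INR n))).
  { intro H. destruct (cip_plus Hc _ _ (H O) H) as [x [_ Hx]].
    destruct (INR_unbounded (f x)) as [n Hn]. specialize (Huz _ _ (Hx n)). lra. }
  assert (Hnv : ~ forall n, M (v (- INR n))).
  { intro H. destruct (cip_plus Hc _ _ (H O) H) as [x [_ Hx]].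
    destruct (INR_unbounded (- f x)) as [n Hn]. specialize (Hvz _ _ (Hx n)). lra. }
  assert (Hab : forall a b, M (u a) -> M (v b) -> a <= b).
  { intros a b Ha Hb. destruct (Hcip2 _ _ Ha Hb) as [x [H1 H2]].
    specialize (Huz _ _ H1); specialize (Hvz _ _ H2); lra. }
  set (E := fun r => exists a, r <= a /\ M (u a)).
  assert (HEb : bound E).
  { apply not_all_ex_not in Hnu. destruct Hnu as [n Hn].
    assert (M (v (INR n))) by (destruct (Hprime (INR n)); tauto).
    exists (INR n). intros r [a [Hra Ha]]. pose proof (Hab _ _ Ha H). lra. }
  assert (HEn : exists r, E r).
  { apply not_all_ex_not in Hnv. destruct Hnv as [n Hn].
    assert (M (u (- INR n))) by (destruct (Hprime (- INR n)); tauto).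
    exists (- INR n), (- INR n). split; [lra|auto]. }
  destruct (completeness E HEb HEn) as [r0 [Hub Hlub]].
  assert (Heps : forall k : nat, 0 < / (INR k + 1)).
  { intro k; apply Rinv_0_lt_compat; pose proof (pos_INR k); lra. }
  assert (Hlow : forall k, exists a, r0 - / (INR k + 1) < a /\ M (u a)).
  { intro k. apply NNPP; intro Hn.
    assert (r0 <= r0 - / (INR k + 1)); [|specialize (Heps k); lra].
    apply Hlub. intros r [a [Hra Ha]].
    destruct (Rle_dec a (r0 - / (INR k + 1))); [lra|].
    exfalso; apply Hn; exists a; split; auto; lra. }
  assert (Hhigh : forall k, M (v (r0 + / (INR k + 1)))).
  { intro k. destruct (Hprime (r0 + / (INR k + 1))) as [H|H]; auto.
    exfalso. assert (r0 + / (INR k + 1) <= r0); [|specialize (Heps k); lra].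
    apply Hub. exists (r0 + / (INR k + 1)). split; [lra|auto]. }
  set (a := fun k => proj1_sig (constructive_indefinite_description _ (Hlow k))).
  assert (Ha : forall k, r0 - / (INR k + 1) < a k /\ M (u (a k))).
  { intro k; unfold a; destruct constructive_indefinite_description; simpl; auto. }
  set (w := fun k x => u (a k) x * u (a k) x +
                       v (r0 + / (INR k + 1)) x * v (r0 + / (INR k + 1)) x).
  assert (Hw : forall k, M (w k)).
  { intro k. apply M_plus; apply M_mul; try apply Ha; try apply Hhigh; auto. }
  exists r0. apply NNPP; intro Hn.
  destruct (decomp (fun x => f x - r0)) as [m [h [Hm [Hh He]]]]; auto.
  { apply B1_minus; auto. apply B1_const. }
  destruct (cip_plus Hc m w Hm Hw) as [x [Hmx Hwx]].
  assert (Hfx : f x = r0).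
  { apply NNPP; intro Hne.
    assert (Hd : 0 < Rabs (f x - r0)) by (apply Rabs_pos_lt; lra).
    destruct (INR_unbounded (/ Rabs (f x - r0))) as [k Hk].
    specialize (Hwx k). unfold w in Hwx.
    assert (u (a k) x = 0 /\ v (r0 + / (INR k + 1)) x = 0) as [H1 H2] by nra.
    apply Huz in H1; apply Hvz in H2. destruct (Ha k) as [Hak _].
    assert (/ (INR k + 1) < Rabs (f x - r0)).
    { rewrite <- (Rinv_inv (Rabs (f x - r0))). apply Rinv_lt_contravar.
      - apply Rmult_lt_0_compat; [apply Rinv_0_lt_compat; auto| pose proof (pos_INR k); lra].
      - lra. }
    split_Rabs; lra. }
  specialize (He x). rewrite Hmx, Hfx in He. lra.
Qed.

End Ideal.

Theorem theorem4p26 (X : Type) (T : topology X) (M : (X -> R) -> Prop)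
  (HM : B1_maximal_ideal T M) :
  (real_ideal T M <-> ZB_closed_countable_inter M) /\
  (ZB_closed_countable_inter M <-> ZB_countable_inter_prop M).
Proof.
  split; split.
  - apply (L12 X T M HM).
  - intro H. apply (L31 X T M HM). apply (L23 X T M HM); auto.
  - apply (L23 X T M HM).
  - apply (L32 X T M HM).
Qed.
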